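(* There exists a sequentially efficient $2$-ADPLS for the maximum weight cut problem with proof size $O(\log n+\log W)$.
   Context: All graphs are finite, connected and undirected, $G=(V,E)$, $n=|V|$, $N(v)$ is the set of neighbors of $v$; each node distinguishes its incident edges by port numbers. An input assignment $\mathsf{I}:V\to\{0,1\}^*$ gives each node a local input; an input graph $\langle G,\mathsf I\rangle$ is a configuration graph with $S=\mathsf I$. Given a universe $\mathcal U$ of configuration graphs and disjoint families $\mathcal F_Y,\mathcal F_N\subseteq\mathcal U$, a gap proof labeling scheme (GPLS) consists of a prover which, given a configuration graph in $\mathcal F_Y$, assigns a label $L(v)\in\{0,1\}^*$ to every node, and a verifier which at each node $v$ receives only $\langle S(v),L(v),L^N(v)\rangle$, where $L^N(v)$ is the vector of labels of $v$'s neighbors (indexed by port), and outputs True or False; the verifier accepts if all nodes output True and rejects otherwise. The GPLS is correct if (i) for every configuration graph in $\mathcal F_Y$ the verifier accepts under the prover's labels, and (ii) for every configuration graph in $\mathcal F_N$ the verifier rejects under every label assignment. Its proof size is the maximum label length over $\mathcal F_Y$. It is sequentially efficient if the prover runs in time polynomial in the encoding length of the configuration graph and the verifier at $v$ runs in time polynomial in $|S(v)|$, $|L(v)|$ and $\sum_{u\in N(v)}|L(u)|$. For a maximization problem with optimum value $OPT(G,\mathsf I)$, $\alpha\ge1$ and $k\in\mathbb Z$, an $\alpha$-ADPLS for the problem and $k$ is a GPLS over the universe of legal input graphs with $\mathcal F_Y=\{OPT\le k\}$ and $\mathcal F_N=\{OPT>\alpha k\}$. ''There exists an $\alpha$-ADPLS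 with proof size $s$'' means that for every $k\in\mathbb Z$ there is one with that proof size bound. Maximum weight cut: the input gives each node a unique identifier of $O(\log n)$ bits and the weights $w:E\to\{1,\dots,W\}$ of its incident edges; a feasible solution is a cut $\emptyset\subsetneq S\subsetneq V$, with objective $w(S)=\sum_{e\in E(S)}w(e)$, $E(S)$ the set of edges with exactly one endpoint in $S$, to be maximized. *)

(* Defs.v *)
From HB Require Import structures.
From mathcomp Require Import all_boot all_order all_algebra.
Set Implicit Arguments. Unset Strict Implicit. Unset Printing Implicit Defensive.
Import Order.TTheory GRing.Theory Num.Theory.

(* binary representation of a natural number (little endian, no trailing
   zeros; 0 is the empty string) *)
Fixpoint nat2bits_aux (fuel n : nat) : seq bool :=
  if fuel is f.+1 then (if n is 0 then [::] else odd n :: nat2bits_aux f n./2)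
  else [::].
Definition nat2bits (n : nat) : seq bool := nat2bits_aux n n.

(* self-delimiting encoding of a list of bit strings:
   each bit b is written b b, each string is terminated by 0 1 *)
Definition enc_bits (x : seq bool) : seq bool := flatten [seq [:: b; b] | b <- x].
Definition enc_list (xs : seq (seq bool)) : seq bool :=
  flatten [seq enc_bits x ++ [:: false; true] | x <- xs].

(* Nodes are 0 .. n-1 (internal names, not seen by the verifier);
   cadj`_v lists the neighbours of v in port order (port i = i-th entry);
   cinp`_v is the local state S(v). *)
Record config := Config { cadj : seq (seq nat); cinp : seq (seq bool) }.

Definition nbrs (adj : seq (seq nat)) (v : nat) : seq nat := nth [::] adj v.

(* finite, connected, simple, undirected graph with port numbering *)
Definition wf_adj (adj : seq (seq nat)) : Prop :=
  let n := size adj in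
  [/\ 0 < n,
      (forall v, v < n -> uniq (nbrs adj v) /\
                 all (fun u => (u < n) && (u != v)) (nbrs adj v)),
      (forall u v, u < n -> v < n -> (u \in nbrs adj v) = (v \in nbrs adj u)) &
      (forall v, v < n -> exists p : seq nat,
            path (fun x y => y \in nbrs adj x) 0 p /\ last 0 p = v)].

Definition wf_config (C : config) : Prop :=
  wf_adj (cadj C) /\ size (cinp C) = size (cadj C).

Definition labels := seq (seq bool).
Definition lab (L : labels) (v : nat) : seq bool := nth [::] L v.

(* the verifier at v sees < S(v), L(v), L^N(v) > *)
Definition verifierT := seq bool -> seq bool -> seq (seq bool) -> bool.

Definition accepts (V : verifierT) (C : config) (L : labels) : Prop :=
  forall v, v < size (cadj C) ->
    V (nth [::] (cinp C) v) (lab L v) [seq lab L u | u <- nbrs (cadj C) v].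

Definition enc_config (C : config) : seq bool :=
  enc_list (mkseq (fun v => enc_list (nth [::] (cinp C) v
                                      :: [seq nat2bits u | u <- nbrs (cadj C) v]))
                  (size (cadj C))).

(* Turing machines (single two-way infinite tape, alphabet {0,1,blank}) *)

Inductive tmove := TLeft | TRight | TStay.

Record TM := {
  tm_Q : finType;
  tm_start : tm_Q;
  tm_halt : tm_Q;
  tm_delta : tm_Q -> option bool -> tm_Q * option bool * tmove }.

Record tmconf (M : TM) := TMConf {
  tc_q : tm_Q M; tc_left : seq (option bool);   (* reversed *)
  tc_head : option bool; tc_right : seq (option bool) }.

Definition tm_step (M : TM) (c : tmconf M) : tmconf M :=
  let q := tc_q c in let l := tc_left c in
  let h := tc_head c in let r := tc_right c in
  if q == tm_halt M then c else
  let: (q', b, m) := @tm_delta M q h in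
  match m with
  | TStay => @TMConf M q' l b r
  | TLeft => @TMConf M q' (behead l) (head None l) (b :: r)
  | TRight => @TMConf M q' (b :: l) (head None r) (behead r)
  end.

Definition tm_init (M : TM) (x : seq bool) : tmconf M :=
  @TMConf M (tm_start M) [::] (head None (map Some x)) (behead (map Some x)).

Fixpoint read_out (s : seq (option bool)) : seq bool :=
  if s is Some b :: s' then b :: read_out s' else [::].

Definition tm_output (M : TM) (c : tmconf M) : seq bool :=
  read_out (tc_head c :: tc_right c).

Definition tm_poly_computes (M : TM) (d : nat) (x y : seq bool) : Prop :=
  let c := iter (d * size x ^ d + d) (tm_step (M:=M)) (tm_init M x) in
  tc_q c = tm_halt M /\ tm_output c = y.

Definition mc_input (adj : seq (seq nat)) (id : nat -> nat) (w : nat -> nat -> nat)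
    (v : nat) : seq bool :=
  enc_list (nat2bits (id v) :: [seq nat2bits (w v u) | u <- nbrs adj v]).

Definition mc_config (adj : seq (seq nat)) (id : nat -> nat) (w : nat -> nat -> nat)
    : config := Config adj (mkseq (mc_input adj id w) (size adj)).

(* legal input graphs; cid is the constant in the O(log n) bound on
   identifier length *)
Definition mc_legal (cid : nat) (adj : seq (seq nat)) (id : nat -> nat)
    (w : nat -> nat -> nat) : Prop :=
  let n := size adj in
  [/\ wf_adj adj,
      (forall u v, u < n -> v < n -> id u = id v -> u = v),
      (forall v, v < n -> size (nat2bits (id v)) <= cid * trunc_log 2 n + cid) &
      (forall u v, v < n -> u \in nbrs adj v -> 0 < w v u /\ w v u = w u v)].

Definition cut_weight (adj : seq (seq nat)) (w : nat -> nat -> nat) (S : nat -> bool)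
    : nat :=
  \sum_(v < size adj) \sum_(u <- nbrs adj v | v < u) (S v != S u) * w v u.

(* optimum over cuts  emptyset <> S <> V  (0 if there is none, i.e. n = 1) *)
Definition mc_OPT (adj : seq (seq nat)) (w : nat -> nat -> nat) : nat :=
  \max_(s : (size adj).-tuple bool |
          [exists i, tnth s i] && [exists i, ~~ tnth s i])
     cut_weight adj w (fun v => nth false s v).

Definition mc_W (adj : seq (seq nat)) (w : nat -> nat -> nat) : nat :=
  \max_(v < size adj) \max_(u <- nbrs adj v) w v u.

Definition mc_ADPLS (alpha : nat) (cid : nat) (k : int) (s : nat -> nat -> nat)
    (P : config -> labels) (V : verifierT) : Prop :=
  (forall adj id w, mc_legal cid adj id w -> (Posz (mc_OPT adj w) <= k)%R ->
     accepts V (mc_config adj id w) (P (mc_config adj id w)) /\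
     (forall v, v < size adj ->
        size (lab (P (mc_config adj id w)) v) <= s (size adj) (mc_W adj w)))
  /\
  (forall adj id w, mc_legal cid adj id w -> (alpha%:Z * k < Posz (mc_OPT adj w))%R ->
     forall L : labels, ~ accepts V (mc_config adj id w) L).

Definition mc_seq_efficient (cid : nat) (k : int) (P : config -> labels) (V : verifierT)
    : Prop :=
  (exists (M : TM) (d : nat), forall adj id w, mc_legal cid adj id w ->
      (Posz (mc_OPT adj w) <= k)%R ->
      tm_poly_computes M d (enc_config (mc_config adj id w))
                           (enc_list (P (mc_config adj id w))))
  /\
  (exists (M : TM) (d : nat), forall (sv l : seq bool) (ln : seq (seq bool)),
      tm_poly_computes M d (enc_list (sv :: l :: ln)) [:: V sv l ln]).

(* Main.v *)
From Stdlib Require Import ClassicalEpsilon.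
Require Import Defs.
From mathcomp Require Import all_boot all_order all_algebra zify.
Set Implicit Arguments. Unset Strict Implicit. Unset Printing Implicit Defensive.

Fixpoint allseqs (n : nat) : seq (seq bool) :=
  if n is m.+1 then [::] :: [seq b :: s | b <- [:: false; true], s <- allseqs m]
  else [:: [::]].

Lemma allseqsP n s : size s <= n -> s \in allseqs n.
Proof.
elim: n s => [|n IH] [|b s] //=; try by rewrite inE.
move=> hs; rewrite inE; apply/orP; right.
by case: b; rewrite !mem_cat map_f ?orbT //; apply: IH.
Qed.

Definition tmD := (nat * seq bool * bool * nat)%type.

Definition Dlist (B J : nat) : seq tmD :=
  [seq (a, j) | a <- [seq (b, o) | b <- [seq (p, s) | p <- iota 0 3, s <- allseqs B],
                                   o <- [:: false; true]], j <- iota 0 J.+1].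

Lemma DlistP B J p s o j : p < 3 -> size s <= B -> j <= J -> (p, s, o, j) \in Dlist B J.
Proof.
move=> hp hs hj.
apply: (@allpairs_f _ _ _ (fun a j => (a, j))); last by rewrite mem_iota.
apply: (@allpairs_f _ _ _ (fun a o => (a, o))); last by case: o.
apply: (@allpairs_f _ _ _ (fun p s => (p, s))); first by rewrite mem_iota.
exact: allseqsP.
Qed.

Definition haltD : tmD := (2, [::], false, 0).

Lemma haltD_in B J : haltD \in Dlist B J.
Proof. exact: DlistP. Qed.



Definition outD (F : seq bool -> seq bool) (yo : seq bool) (s : seq bool) (o : bool) :=
  if o then yo else F (rev s).

Definition Jb (B : nat) (F : seq bool -> seq bool) (yo : seq bool) := maxn (size yo) (\max_(t <- allseqs B) size (F t)).

Lemma outD_le B F yo s o : size s <= B -> size (outD F yo s o) <= Jb B F yo.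
Proof.
move=> hs; rewrite /outD /Jb; case: o; first exact: leq_maxl.
apply: leq_trans (leq_maxr _ _).
apply: (@leq_bigmax_seq _ _ xpredT (fun t => size (F t)) (rev s)) => //.
by apply: allseqsP; rewrite size_rev.
Qed.

Definition deltaD B F yo (d : tmD) (h : option bool) : tmD * option bool * tmove :=
  let: (p, s, o, j) := d in
  if p == 0 then
    match h with
    | Some b => (if size s < B then (0, b :: s, o, 0) else (0, s, true, 0), Some b, TRight)
    | None => let y := outD F yo s o in
              (if size y == 0 then haltD else (1, s, o, size y), None, TStay)
    end
  else if p == 1 then
    let y := outD F yo s o in
    (if j <= 1 then haltD else (1, s, o, j.-1), Some (nth false y j.-1),
     if j <= 1 then TStay else TLeft)
  else (haltD, h, TStay).

Definition qh B J : seq_sub (Dlist B J) := SeqSub (haltD_in B J).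
Definition qOf B J (d : tmD) : seq_sub (Dlist B J) := insubd (qh B J) d.

Definition lookupTM B F yo : TM :=
  @Build_TM (seq_sub (Dlist B (Jb B F yo))) (qOf B (Jb B F yo) (0, [::], false, 0))
    (qh B (Jb B F yo))
    (fun q h => let: (d, b, m) := deltaD B F yo (val q) h in (qOf B (Jb B F yo) d, b, m)).

Lemma val_qOf B J d : d \in Dlist B J -> val (qOf B J d) = d.
Proof. by move=> hd; rewrite /qOf val_insubd hd. Qed.

Lemma halted_iter (M : TM) n (c : tmconf M) : tc_q c = tm_halt M -> iter n (@tm_step M) c = c.
Proof.
move=> hc; elim: n => //= n ->.
by rewrite /tm_step hc eqxx.
Qed.

Fixpoint scanres B s o (x : seq bool) :=
  if x is b :: x' then (if size s < B then scanres B (b :: s) o x' else scanres B s true x')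
  else (s, o).

Lemma scanres_size B s o x : size s <= B -> size (scanres B s o x).1 <= B.
Proof.
elim: x s o => //= b x IH s o hs.
by case: ifP => h; apply: IH.
Qed.

Lemma scanres_ok B s x : size s + size x <= B -> scanres B s false x = (catrev x s, false).
Proof.
elim: x s => [|b x IH] s /=; first by rewrite addn0.
move=> h; have -> : size s < B by apply: leq_trans h; rewrite -addSnnS leq_addr.
by apply: IH; rewrite /= addSnnS.
Qed.

Lemma scanres_true B s x : (scanres B s true x).2 = true.
Proof. by elim: x s => //= b x IH s; case: ifP. Qed.

Lemma scanres_ov B s x : size s <= B -> B < size s + size x -> (scanres B s false x).2 = true.
Proof.
elim: x s => [|b x IH] s /=; first by rewrite addn0 => h1 h2; move: (leq_trans h2 h1); rewrite ltnn.
move=> h1 h; case: ifP => hs.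
  by apply: IH => //; rewrite /= addSnnS.
exact: scanres_true.
Qed.

Lemma qOf_nh B J d : d \in Dlist B J -> d.1.1.1 != 2 -> (qOf B J d == qh B J) = false.
Proof.
move=> hd h; apply/negbTE; apply/negP => /eqP /(congr1 val).
by rewrite val_qOf //= => e; move: h; rewrite e.
Qed.

Lemma qOf_h B J : qOf B J haltD = qh B J.
Proof. by apply: val_inj; rewrite val_qOf // haltD_in. Qed.

Lemma step_scan_some B F yo s o l b r : size s <= B ->
  @tm_step (lookupTM B F yo) (@TMConf (lookupTM B F yo) (qOf B (Jb B F yo) (0, s, o, 0)) l (Some b) r) =
  @TMConf (lookupTM B F yo)
     (qOf B (Jb B F yo) (if size s < B then (0, b :: s, o, 0) else (0, s, true, 0)))
     (Some b :: l) (head None r) (behead r).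
Proof.
move=> hs; have hd : (0, s, o, 0) \in Dlist B (Jb B F yo) by apply: DlistP.
by rewrite /tm_step /= qOf_nh //= val_qOf //=; case: ifP.
Qed.

Lemma iter_scan B F yo x s o l : size s <= B ->
  iter (size x) (@tm_step (lookupTM B F yo))
    (@TMConf (lookupTM B F yo) (qOf B (Jb B F yo) (0, s, o, 0)) l
       (head None (map Some x)) (behead (map Some x))) =
  @TMConf (lookupTM B F yo) (qOf B (Jb B F yo) (0, (scanres B s o x).1, (scanres B s o x).2, 0))
     (catrev (map Some x) l) None [::].
Proof.
elim: x s o l => [|b x IH] s o l hs //=.
rewrite -iterS iterSr step_scan_some //.
case: ifP => h.
- by rewrite (IH (b :: s)).
- by rewrite IH.
Qed.

Lemma step_scan_none B F yo s o l r : size s <= B ->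
  @tm_step (lookupTM B F yo) (@TMConf (lookupTM B F yo) (qOf B (Jb B F yo) (0, s, o, 0)) l None r) =
  @TMConf (lookupTM B F yo)
     (qOf B (Jb B F yo) (if size (outD F yo s o) == 0 then haltD else (1, s, o, size (outD F yo s o))))
     l None r.
Proof.
move=> hs; have hd : (0, s, o, 0) \in Dlist B (Jb B F yo) by apply: DlistP.
by rewrite /tm_step /= qOf_nh //= val_qOf.
Qed.

Lemma step_write B F yo s o j l h r : size s <= B -> 0 < j -> j <= size (outD F yo s o) ->
  @tm_step (lookupTM B F yo)
    (@TMConf (lookupTM B F yo) (qOf B (Jb B F yo) (1, s, o, j)) l h r) =
  if j <= 1 then
    @TMConf (lookupTM B F yo) (qh B (Jb B F yo)) l (Some (nth false (outD F yo s o) j.-1)) r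
  else
    @TMConf (lookupTM B F yo) (qOf B (Jb B F yo) (1, s, o, j.-1)) (behead l) (head None l)
      (Some (nth false (outD F yo s o) j.-1) :: r).
Proof.
move=> hs hj0 hj.
have hd : (1, s, o, j) \in Dlist B (Jb B F yo).
  by apply: DlistP => //; apply: (leq_trans hj); apply: outD_le.
rewrite /tm_step /= qOf_nh //= val_qOf //=.
by case: ifP => _ //; rewrite qOf_h.
Qed.

Lemma iter_write B F yo s o j l h r : size s <= B -> 0 < j -> j <= size (outD F yo s o) ->
  exists l',
  iter j (@tm_step (lookupTM B F yo))
    (@TMConf (lookupTM B F yo) (qOf B (Jb B F yo) (1, s, o, j)) l h r) =
  @TMConf (lookupTM B F yo) (qh B (Jb B F yo)) l' (Some (nth false (outD F yo s o) 0))
     (map Some (drop 1 (take j (outD F yo s o))) ++ r).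
Proof.
move=> hs; elim: j l h r => [//|j IH] l h r _ hj.
rewrite iterSr step_write //.
case: j IH hj => [|j] IH hj /=.
  exists l; rewrite /=.
  by case: (outD F yo s o) hj => //= a y _; rewrite take0.
have [l' E] := IH (behead l) (head None l) (Some (nth false (outD F yo s o) j.+1) :: r) isT (ltnW hj).
rewrite -iterS E; exists l'; congr TMConf.
rewrite (take_nth false hj) -cats1 drop_cat size_take hj.
case: j hj {IH E} => [|j] hj /=.
  by case: (outD F yo s o) hj => //= a [|b y] //= _; rewrite take0.
by rewrite map_cat -catA.
Qed.

Lemma le_poly a d : 0 < d -> a <= d * a ^ d.
Proof.
move=> hd; case: a => [|a] //.
apply: leq_trans (leq_pmull _ hd).
by rewrite -{1}(expn1 a.+1); apply: leq_pexp2l.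
Qed.

Lemma read_out_map y : read_out (map Some y) = y.
Proof. by elim: y => //= a y ->. Qed.

Lemma lookup_ok B F yo : exists (M : TM) (d : nat), forall x,
  tm_poly_computes M d x (if size x <= B then F x else yo).
Proof.
exists (lookupTM B F yo), (Jb B F yo).+2 => x.
rewrite /tm_poly_computes.
set N := _ * _ + _.
set s := (scanres B [::] false x).1.
set o := (scanres B [::] false x).2.
have hs : size s <= B by apply: scanres_size.
have hy : outD F yo s o = if size x <= B then F x else yo.
  rewrite /outD /s /o; case: (leqP (size x) B) => h.
    by rewrite scanres_ok //= revK.
  by rewrite scanres_ov.
have hyJ : size (outD F yo s o) <= Jb B F yo by apply: outD_le.
have hc1 : iter (size x) (@tm_step (lookupTM B F yo)) (tm_init (lookupTM B F yo) x) =
   @TMConf (lookupTM B F yo) (qOf B (Jb B F yo) (0, s, o, 0)) (catrev (map Some x) [::]) None [::].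
  by rewrite /tm_init /= iter_scan.
have hN : size x + 1 + size (outD F yo s o) <= N.
  rewrite /N -addnA leq_add //; first by apply: le_poly.
  by rewrite add1n ltnS (leq_trans hyJ).
rewrite -hy.
case: (posnP (size (outD F yo s o))) => hy0.
- have -> : N = (N - (size x).+1) + (size x).+1.
    by rewrite subnK // (leq_trans _ hN) // addn1 leq_addr.
  rewrite iterD iterS hc1 step_scan_none // hy0 /= qOf_h halted_iter //=.
  by case: (outD F yo s o) hy0.
- have -> : N = (N - (size x + 1 + size (outD F yo s o))) + (size (outD F yo s o) + (size x).+1).
    have e : size (outD F yo s o) + (size x).+1 = size x + 1 + size (outD F yo s o).
      by rewrite addnC addn1.
    by rewrite e subnK.
  rewrite iterD iterD iterS hc1 step_scan_none //.
  have -> : (size (outD F yo s o) == 0) = false by apply/eqP => e; move: hy0; rewrite e.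
  have [l' ->] := iter_write (catrev [seq Some i | i <- x] [::]) None [::] hs hy0 (leqnn _).
  rewrite halted_iter //= take_size cats0 /tm_output /=.
  by case: (outD F yo s o) hy0 => //= a y _; rewrite drop0 read_out_map.
Qed.

Definition bits2nat (s : seq bool) : nat := foldr (fun (b : bool) (n : nat) => (b : nat) + n.*2) 0 s.

Lemma nat2bits_auxE f n : n <= f -> nat2bits_aux f n = if n is 0 then [::] else odd n :: nat2bits_aux f.-1 n./2.
Proof. by case: f => [|f] /=; [rewrite leqn0 => /eqP -> | ]. Qed.

Lemma half_lt n : 0 < n -> n./2 < n.
Proof. by move=> h; rewrite -divn2 ltn_Pdiv. Qed.

Lemma nat2bits_aux_ok f n : n <= f -> bits2nat (nat2bits_aux f n) = n /\ size (nat2bits_aux f n) <= n.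
Proof.
elim: f n => [|f IH] n hn.
  by move: hn; rewrite leqn0 => /eqP ->.
case: n hn => [|n] hn //=.
have h2 : n.+1./2 <= f by rewrite -ltnS (leq_trans (half_lt _) hn).
have [e s] := IH _ h2.
split; first by rewrite e; rewrite -[in RHS](odd_double_half n.+1).
apply: leq_ltn_trans s _; exact: half_lt.
Qed.

Lemma nat2bitsK n : bits2nat (nat2bits n) = n.
Proof. by case: (nat2bits_aux_ok (leqnn n)). Qed.

Lemma size_nat2bits n : size (nat2bits n) <= n.
Proof. by case: (nat2bits_aux_ok (leqnn n)). Qed.

Lemma size_nat2bits_aux_log f n : n <= f -> size (nat2bits_aux f n) <= trunc_log 2 n + 1.
Proof.
elim: f n => [|f IH] n hn.
  by move: hn; rewrite leqn0 => /eqP ->.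
case: n hn => [|n] hn //=.
have h2 : n.+1./2 <= f by rewrite -ltnS (leq_trans (half_lt _) hn).
case: n hn h2 => [|n] hn h2; first by case: f {IH hn h2}.
rewrite (trunc_log2S (isT : 1 < n.+2)) addn1 ltnS.
by move: (IH _ h2); rewrite addn1.
Qed.

Lemma size_nat2bits_log n : size (nat2bits n) <= trunc_log 2 n + 1.
Proof. exact: size_nat2bits_aux_log. Qed.

Fixpoint dec_aux (s : seq bool) (cur : seq bool) : seq (seq bool) :=
  match s with
  | a :: b :: s' => if a == b then dec_aux s' (rcons cur a) else cur :: dec_aux s' [::]
  | _ => [::]
  end.
Definition dec (s : seq bool) := dec_aux s [::].

Lemma dec_aux_cons x rest cur :
  dec_aux (enc_bits x ++ [:: false; true] ++ rest) cur = (cur ++ x) :: dec_aux rest [::].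
Proof.
elim: x cur => [|b x IH] cur /=; first by rewrite cats0.
by rewrite eqxx IH cat_rcons.
Qed.

Lemma enc_list_cons x xs : enc_list (x :: xs) = enc_bits x ++ [:: false; true] ++ enc_list xs.
Proof. by rewrite /enc_list /= -catA. Qed.

Lemma decK xs : dec (enc_list xs) = xs.
Proof.
elim: xs => [//|x xs IH].
by rewrite enc_list_cons /dec dec_aux_cons -/(dec _) IH.
Qed.

Lemma size_enc_bits x : size (enc_bits x) = (size x).*2.
Proof. by elim: x => //= b x IH; rewrite IH doubleS. Qed.

Lemma size_enc_list xs : size (enc_list xs) = \sum_(x <- xs) ((size x).*2 + 2).
Proof.
elim: xs => [|x xs IH]; first by rewrite big_nil.
by rewrite enc_list_cons big_cons !size_cat IH size_enc_bits addnA.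
Qed.

Lemma size_enc_list_le xs m : (forall x, x \in xs -> size x <= m) ->
  size (enc_list xs) <= size xs * (m.*2 + 2).
Proof.
move=> h; rewrite size_enc_list.
elim: xs h => [|x xs IH] h; first by rewrite big_nil.
rewrite big_cons mulSn leq_add //.
  by rewrite leq_add2r leq_double h // mem_head.
by apply: IH => y hy; apply: h; rewrite inE hy orbT.
Qed.

Lemma sum_seq_ord (s : seq nat) n (g : nat -> nat) : uniq s -> all (fun u => u < n) s ->
  \sum_(u <- s) g u = \sum_(u < n | (u : nat) \in s) g u.
Proof.
move=> us als.
rewrite -(big_mkord (fun u => u \in s)) /index_iota subn0 -[in RHS]big_filter.
apply: perm_big; apply: uniq_perm => //; first by rewrite filter_uniq // iota_uniq.
move=> u; rewrite mem_filter mem_iota /= add0n.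
case hu: (u \in s) => //=.
by move/allP: als => /(_ _ hu) ->.
Qed.

Lemma nbr_ord adj v (g : nat -> nat) : wf_adj adj -> v < size adj ->
  \sum_(u <- nbrs adj v) g u = \sum_(u < size adj | (u : nat) \in nbrs adj v) g u.
Proof.
case=> _ h _ _ hv; have [u1 u2] := h v hv.
apply: sum_seq_ord => //.
by apply/allP => u /(allP u2) /andP [].
Qed.

Lemma nbr_swap adj (f : nat -> nat -> nat) : wf_adj adj ->
  \sum_(v < size adj) \sum_(u <- nbrs adj v) f v u =
  \sum_(u < size adj) \sum_(v <- nbrs adj u) f v u.
Proof.
move=> hw.
rewrite (eq_bigr (fun v : 'I_(size adj) => \sum_(u < size adj) if (u : nat) \in nbrs adj v then f v u else 0)); last first.
  by move=> v _; rewrite nbr_ord // big_mkcond.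
rewrite [RHS](eq_bigr (fun u : 'I_(size adj) => \sum_(v < size adj) if (v : nat) \in nbrs adj u then f v u else 0)); last first.
  by move=> u _; rewrite nbr_ord // big_mkcond.
rewrite exchange_big /=; apply: eq_bigr => u _.
apply: eq_bigr => v _.
by case: hw => _ _ hs _; rewrite hs.
Qed.

Lemma nbr_sym adj v u : wf_adj adj -> v < size adj -> u \in nbrs adj v ->
  [/\ u < size adj, u != v & v \in nbrs adj u].
Proof.
move=> hw hv hu; case: hw => _ h hs _.
have [_ /allP /(_ _ hu) /andP [un uv]] := h v hv.
by split => //; rewrite hs.
Qed.

Lemma nbr_double adj (g : nat -> nat -> nat) : wf_adj adj ->
  (forall v u, v < size adj -> u \in nbrs adj v -> g v u = g u v) ->
  \sum_(v < size adj) \sum_(u <- nbrs adj v) g v u =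
  (\sum_(v < size adj) \sum_(u <- nbrs adj v | v < u) g v u).*2.
Proof.
move=> hw hg.
rewrite -addnn.
rewrite (eq_bigr (fun v : 'I_(size adj) => \sum_(u <- nbrs adj v | v < u) g v u +
                 \sum_(u <- nbrs adj v | ~~ (v < u)) g v u)); last by move=> v _; rewrite (bigID (fun u => v < u)).
rewrite big_split /=; congr (_ + _).
rewrite (eq_bigr (fun v : 'I_(size adj) => \sum_(u <- nbrs adj v) (if ~~ (v < u) then g v u else 0))); last first.
  by move=> v _; rewrite big_mkcond.
rewrite (nbr_swap (fun v u => if ~~ (v < u) then g v u else 0)) //.
apply: eq_bigr => u _.
rewrite [RHS]big_mkcond big_seq [RHS]big_seq.
apply: eq_bigr => v hv.
have [vn vu uv] := nbr_sym hw (ltn_ord u) hv.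
rewrite -leqNgt leq_eqVlt eq_sym (negbTE vu) /=.
by case: ifP => // _; rewrite hg.
Qed.

Definition flipseq n v (s : seq bool) : seq bool :=
  mkseq (fun j => if j == v then ~~ nth false s j else nth false s j) n.

Lemma size_flipseq n v s : size (flipseq n v s) == n.
Proof. by rewrite size_mkseq. Qed.

Definition flipt n v (t : n.-tuple bool) : n.-tuple bool := Tuple (size_flipseq n v t).

Lemma nth_flipt n v (t : n.-tuple bool) j : j < n ->
  nth false (flipt v t) j = if j == v then ~~ nth false t j else nth false t j.
Proof. by move=> hj; rewrite /= nth_mkseq. Qed.

Lemma fliptK n v : involutive (@flipt n v).
Proof.
move=> t; apply: val_inj => /=.
apply: (@eq_from_nth _ false); first by rewrite size_mkseq size_tuple.
move=> j; rewrite size_mkseq => hj.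
rewrite nth_mkseq // nth_flipt //.
by case: (j == v) => //=; rewrite negbK.
Qed.

Lemma count_neq n v u : v < n -> u < n -> v != u ->
  (\sum_(t : n.-tuple bool) (nth false t v != nth false t u)).*2 = 2 ^ n.
Proof.
move=> hv hu hvu.
have e : \sum_(t : n.-tuple bool) (nth false t v != nth false t u) =
         \sum_(t : n.-tuple bool) (nth false t v == nth false t u).
  rewrite (reindex_inj (can_inj (fliptK v))) /=.
  apply: eq_bigr => t _.
  have huv : (u == v) = false by apply/eqP => e; move: hvu; rewrite e eqxx.
  rewrite !nth_flipt // eqxx huv.
  by case: (nth false t v); case: (nth false t u).
rewrite -addnn {2}e -big_split /=.
rewrite (eq_bigr (fun _ => 1)); last by move=> t _; case: (_ == _).
by rewrite sum_nat_const card_tuple card_bool muln1.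
Qed.

Definition sl adj (w : nat -> nat -> nat) := \sum_(v < size adj) \sum_(u <- nbrs adj v) w v u.
Definition Dc adj (w : nat -> nat -> nat) (S : nat -> bool) :=
  \sum_(v < size adj) \sum_(u <- nbrs adj v) (S v != S u) * w v u.

Definition wsym adj (w : nat -> nat -> nat) :=
  forall v u, v < size adj -> u \in nbrs adj v -> w v u = w u v.

Lemma Dc_double adj w S : wf_adj adj -> wsym adj w ->
  Dc adj w S = (cut_weight adj w S).*2.
Proof.
move=> hw hs; rewrite /Dc (@nbr_double adj (fun v u => (S v != S u) * w v u)) //.
by move=> v u hv hu; rewrite hs // eq_sym.
Qed.

Lemma Dc_le adj w S : Dc adj w S <= sl adj w.
Proof.
apply: leq_sum => v _; apply: leq_sum => u _.
by case: (S v != S u); rewrite ?mul1n ?mul0n.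
Qed.

Lemma OPT_le adj w : wf_adj adj -> wsym adj w -> (mc_OPT adj w).*2 <= sl adj w.
Proof.
move=> hw hs.
have h : mc_OPT adj w <= (sl adj w)./2.
  apply/bigmax_leqP => t _.
  rewrite -(half_double (cut_weight _ _ _)) half_leq // -Dc_double //.
  exact: Dc_le.
apply: (@leq_trans (((sl adj w)./2).*2)); first by rewrite leq_double.
rewrite -{2}(odd_double_half (sl adj w)); exact: leq_addl.
Qed.

Lemma sum_Dc adj w : wf_adj adj ->
  (\sum_(t : (size adj).-tuple bool) Dc adj w (fun v => nth false t v)).*2 = sl adj w * 2 ^ size adj.
Proof.
move=> hw; rewrite /Dc exchange_big -muln2 big_distrl /= /sl big_distrl /=.
apply: eq_bigr => v _.
rewrite exchange_big big_distrl big_distrl /=.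
rewrite big_seq [RHS]big_seq; apply: eq_bigr => u hu.
have [un uv _] := nbr_sym hw (ltn_ord v) hu.
rewrite -big_distrl /= -mulnA [w v u * _]mulnC mulnA muln2.
by rewrite count_neq 1?eq_sym // mulnC.
Qed.

Lemma exists_good_cut adj w : wf_adj adj ->
  exists t : (size adj).-tuple bool, sl adj w <= (Dc adj w (fun v => nth false t v)).*2.
Proof.
move=> hw.
case: (boolP [exists t : (size adj).-tuple bool, sl adj w <= (Dc adj w (fun v => nth false t v)).*2]).
  by move/existsP.
move/existsPn => h; exfalso.
have h2 : \sum_(t : (size adj).-tuple bool) ((Dc adj w (fun v => nth false t v)) * 2 + 1)
          <= \sum_(t : (size adj).-tuple bool) sl adj w.
  by apply: leq_sum => t _; rewrite addn1 muln2; move: (h t); rewrite -ltnNge.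
move: h2; rewrite big_split /= -big_distrl /= muln2 sum_Dc // sum_nat_const card_tuple card_bool.
rewrite muln1 sum_nat_const card_tuple card_bool [_ * sl _ _]mulnC -[X in _ <= X](addn0 (sl adj w * _)) leq_add2l leqn0 expn_eq0.
by [].
Qed.

Lemma cut_const adj w (S : nat -> bool) b : wf_adj adj ->
  (forall v, v < size adj -> S v = b) -> cut_weight adj w S = 0.
Proof.
move=> hw hS; apply: big1 => v _; rewrite big_seq_cond; apply: big1 => u /andP [hu _].
have [un _ _] := nbr_sym hw (ltn_ord v) hu.
by rewrite !hS // eqxx mul0n.
Qed.

Lemma sl_le_OPT adj w : wf_adj adj -> wsym adj w -> sl adj w <= (mc_OPT adj w).*2.*2.
Proof.
move=> hw hs.
have [t ht] := exists_good_cut w hw.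
apply: (leq_trans ht); rewrite Dc_double // !leq_double.
case: (boolP [exists i, tnth t i]) => h1; last first.
  rewrite (@cut_const _ _ _ false) // => v hv.
  move/existsPn: h1 => /(_ (Ordinal hv)); rewrite (tnth_nth false) /=.
  by case: (nth false t v).
case: (boolP [exists i, ~~ tnth t i]) => h2; last first.
  rewrite (@cut_const _ _ _ true) // => v hv.
  move/existsPn: h2 => /(_ (Ordinal hv)); rewrite (tnth_nth false) /=.
  by case: (nth false t v).
by apply: (@leq_bigmax_cond _ _ (fun s : (size adj).-tuple bool => cut_weight adj w (fun v => nth false s v)) t); rewrite h1 h2.
Qed.

Definition fld (i : nat) (l : seq bool) := bits2nat (nth [::] (dec l) i).
Definition flg (l : seq bool) := fld 0 l != 0.
Definition idin (sv : seq bool) := bits2nat (nth [::] (dec sv) 0).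
Definition locin (sv : seq bool) := \sum_(x <- behead (dec sv)) bits2nat x.

Definition Vreal (K : nat) (sv l : seq bool) (ln : seq (seq bool)) : bool :=
  [&& fld 1 l == idin sv,
      all (fun m => fld 2 m == fld 2 l) ln,
      flg l ==> (fld 1 l == fld 2 l) && (fld 4 l <= K),
      ~~ flg l ==> has (fun m => fld 1 m == fld 3 l) ln &
      locin sv + \sum_(m <- ln | ~~ flg m && (fld 3 m == fld 1 l)) fld 4 m <= fld 4 l].

Lemma idin_mc adj id w v : idin (mc_input adj id w v) = id v.
Proof. by rewrite /idin /mc_input decK /= nat2bitsK. Qed.

Lemma locin_mc adj id w v : locin (mc_input adj id w v) = \sum_(u <- nbrs adj v) w v u.
Proof.
rewrite /locin /mc_input decK /= big_map; apply: eq_bigr => u _.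
by rewrite nat2bitsK.
Qed.

Lemma path_const adj (g : nat -> nat) : wf_adj adj ->
  (forall v u, v < size adj -> u \in nbrs adj v -> g u = g v) ->
  forall p x, x < size adj -> path (fun x y => y \in nbrs adj x) x p -> g (last x p) = g x.
Proof.
move=> hw hg; elim=> [//|y p IH] x hx /= /andP [hy hp].
have [yn _ _] := nbr_sym hw hx hy.
by rewrite IH // (hg x y).
Qed.

Lemma path_lt adj : wf_adj adj ->
  forall p x, x < size adj -> path (fun x y => y \in nbrs adj x) x p -> last x p < size adj.
Proof.
move=> hw; elim=> [//|y p IH] x hx /= /andP [hy hp].
have [yn _ _] := nbr_sym hw hx hy.
exact: IH.
Qed.

Lemma sound cid K adj id w L : mc_legal cid adj id w ->
  (forall v, v < size adj ->
     Vreal K (mc_input adj id w v) (lab L v) [seq lab L u | u <- nbrs adj v]) ->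
  sl adj w <= K.
Proof.
case=> hw hid _ hwt hacc.
set n := size adj.
pose F i v := fld i (lab L v).
pose fl v := flg (lab L v).
have A1 : forall v, v < n -> F 1 v = id v.
  by move=> v hv; case/and5P: (hacc v hv) => /eqP h _ _ _ _; rewrite /F h idin_mc.
have A2 : forall v u, v < n -> u \in nbrs adj v -> F 2 u = F 2 v.
  move=> v u hv hu; case/and5P: (hacc v hv) => _ /allP h _ _ _.
  by apply/eqP; apply: (h (lab L u)); apply: map_f.
have A3 : forall v, v < n -> fl v -> F 1 v = F 2 v /\ F 4 v <= K.
  move=> v hv hf; case/and5P: (hacc v hv) => _ _ /implyP /(_ hf) /andP [/eqP h1 h2] _ _.
  by [].
have A4 : forall v, v < n -> ~~ fl v -> exists2 u, u \in nbrs adj v & F 1 u = F 3 v.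
  move=> v hv hf; case/and5P: (hacc v hv) => _ _ _ /implyP /(_ hf) /hasP [m].
  by case/mapP => u hu -> /eqP h; exists u.
have A5 : forall v, v < n ->
    \sum_(u <- nbrs adj v) w v u + \sum_(u <- nbrs adj v) (if ~~ fl u && (F 3 u == id v) then F 4 u else 0)
    <= F 4 v.
  move=> v hv; case/and5P: (hacc v hv) => _ _ _ _.
  rewrite locin_mc big_map => h; rewrite -(A1 v hv) /fl /F -big_mkcond; exact: h.
have R0 : forall v, v < n -> F 2 v = F 2 0.
  move=> v hv; have hc := hw; case: hc => hn _ _ hc.
  have [p [hp hl]] := hc v hv.
  by rewrite -hl (@path_const adj (F 2) hw A2 p 0 hn hp).
have PU : forall u, u < n ->
    \sum_(v <- nbrs adj u) (if ~~ fl u && (F 3 u == id v) then F 4 u else 0) =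
    if fl u then 0 else F 4 u.
  move=> u hu; case: ifP => hf.
    by apply: big1.
  have [v0 hv0 e0] := A4 u hu (negbT hf).
  have [v0n _ _] := nbr_sym hw hu hv0.
  have un : uniq (nbrs adj u) by case: hw => _ h _ _; case: (h u hu).
  rewrite (bigD1_seq v0) //= -e0 A1 // eqxx big1_seq ?addn0 // => v /andP [hv hv1].
  have [vn _ _] := nbr_sym hw hu hv1.
  case: eqP => // e; exfalso; move/negP: hv; apply; apply/eqP.
  by apply: hid => //; rewrite -A1 // e A1.
have S1 : sl adj w + \sum_(v < n) \sum_(u <- nbrs adj v)
            (if ~~ fl u && (F 3 u == id v) then F 4 u else 0) <= \sum_(v < n) F 4 v.
  by rewrite /sl -big_split; apply: leq_sum => v _; apply: A5.
have S2 : \sum_(v < n) \sum_(u <- nbrs adj v) (if ~~ fl u && (F 3 u == id v) then F 4 u else 0)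
          = \sum_(u < n) (if fl u then 0 else F 4 u).
  rewrite (@nbr_swap adj (fun v u => if ~~ fl u && (F 3 u == id v) then F 4 u else 0)) //.
  by apply: eq_bigr => u _; apply: PU.
have S3 : \sum_(v < n) F 4 v =
          \sum_(v < n) (if fl v then F 4 v else 0) + \sum_(v < n) (if fl v then 0 else F 4 v).
  by rewrite -big_split; apply: eq_bigr => v _; case: (fl v) => /=; rewrite ?addn0.
have S4 : sl adj w <= \sum_(v < n) (if fl v then F 4 v else 0).
  by move: S1; rewrite S2 S3 leq_add2r.
apply: (leq_trans S4).
case: (pickP (fun v : 'I_n => fl v)) => [r hr | none]; last first.
  by rewrite big1 // => v _; rewrite none.
rewrite (bigD1 r) //= hr big1 ?addn0; first by case: (A3 r (ltn_ord r) hr).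
move=> v hvr; case: ifP => // hv; exfalso; move/negP: hvr; apply.
apply/eqP; apply: val_inj; apply: hid => //=.
have [e1 _] := A3 r (ltn_ord r) hr.
have [e2 _] := A3 v (ltn_ord v) hv.
by rewrite -(A1 r) // -(A1 v) // e1 e2 !R0.
Qed.

Fixpoint reach (adj : seq (seq nat)) (m v : nat) : bool :=
  if m is m'.+1 then has (fun x => reach adj m' x && (v \in nbrs adj x)) (iota 0 (size adj))
  else v == 0.

Definition dist adj v : nat :=
  match excluded_middle_informative (exists m, reach adj m v) with
  | left h => ex_minn h
  | right _ => 0
  end.

Definition par adj v : nat :=
  head 0 [seq x <- iota 0 (size adj) | (dist adj x == (dist adj v).-1) && (v \in nbrs adj x)].

Lemma reach_path adj : wf_adj adj -> forall p x m, x < size adj -> reach adj m x ->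
  path (fun x y => y \in nbrs adj x) x p -> reach adj (size p + m) (last x p).
Proof.
move=> hw; elim=> [//|y p IH] x m hx hr hp'.
have /andP [hy hp] := hp'.
have [yn _ _] := nbr_sym hw hx hy.
change (reach adj ((size p).+1 + m) (last y p)); rewrite addSnnS.
apply: IH => //.
rewrite /=; apply/hasP; exists x; first by rewrite mem_iota. by rewrite hr hy.
Qed.

Lemma reach_ex adj v : wf_adj adj -> v < size adj -> exists m, reach adj m v.
Proof.
move=> hw hv; have hw' := hw; case: hw' => hn _ _ hc.
have [p [hp hl]] := hc v hv.
exists (size p + 0); rewrite -hl; apply: reach_path => //.
Qed.

Lemma dist_spec adj v : wf_adj adj -> v < size adj ->
  reach adj (dist adj v) v /\ forall m, reach adj m v -> dist adj v <= m.
Proof.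
move=> hw hv; rewrite /dist.
case: excluded_middle_informative => [h|h]; last by exfalso; apply: h; apply: reach_ex.
by case: ex_minnP.
Qed.

Lemma dist0 adj : wf_adj adj -> dist adj 0 = 0.
Proof.
move=> hw; have hn : 0 < size adj by case: hw.
have [_ h] := dist_spec hw hn.
by apply/eqP; rewrite -leqn0; apply: h.
Qed.

Lemma dist_pos adj v : wf_adj adj -> v < size adj -> v != 0 -> 0 < dist adj v.
Proof.
move=> hw hv hv0; have [h _] := dist_spec hw hv.
by move: h; case: (dist adj v) => //= /eqP e; move: hv0; rewrite e.
Qed.

Lemma dist_step adj x v : wf_adj adj -> x < size adj -> v \in nbrs adj x ->
  dist adj v <= (dist adj x).+1.
Proof.
move=> hw hx hv; have [vn _ _] := nbr_sym hw hx hv.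
have [h1 _] := dist_spec hw hx.
have [_ h2] := dist_spec hw vn.
apply: h2 => /=; apply/hasP; exists x; first by rewrite mem_iota. by rewrite h1 hv.
Qed.

Lemma par_spec adj v : wf_adj adj -> v < size adj -> v != 0 ->
  [/\ par adj v < size adj, v \in nbrs adj (par adj v), par adj v \in nbrs adj v &
      dist adj (par adj v) = (dist adj v).-1].
Proof.
move=> hw hv hv0.
have hd := dist_pos hw hv hv0.
have [h1 _] := dist_spec hw hv.
have ex : has (fun x => (dist adj x == (dist adj v).-1) && (v \in nbrs adj x)) (iota 0 (size adj)).
  move: h1; case e: (dist adj v) hd => [//|m] _ /= /hasP [x hx /andP [hr hvx]].
  apply/hasP; exists x => //; rewrite hvx andbT.
  have xn : x < size adj by move: hx; rewrite mem_iota.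
  have [_ hmin] := dist_spec hw xn.
  have le1 := hmin _ hr.
  have le2 := dist_step hw xn hvx.
  by rewrite eqn_leq le1 -ltnS -e le2.
have : par adj v \in [seq x <- iota 0 (size adj) | (dist adj x == (dist adj v).-1) && (v \in nbrs adj x)].
  rewrite /par; move: ex; rewrite has_filter.
  by case: [seq x <- _ | _] => //= a s _; rewrite mem_head.
rewrite mem_filter mem_iota /= add0n => /andP [/andP [/eqP hd' hvp] hpn].
have [_ _ hs] := nbr_sym hw hpn hvp.
by split.
Qed.

Fixpoint sf adj (loc : nat -> nat) (f v : nat) : nat :=
  loc v + (if f is f'.+1 then \sum_(c <- nbrs adj v | (c != 0) && (par adj c == v)) sf adj loc f' c
           else 0).
Definition Hd adj := (\max_(v < size adj) dist adj v).+1.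
Definition ssum adj loc v := sf adj loc (Hd adj - dist adj v) v.

Lemma dist_lt_H adj v : v < size adj -> dist adj v < Hd adj.
Proof. by move=> hv; rewrite ltnS (@leq_bigmax _ (fun v : 'I_(size adj) => dist adj v) (Ordinal hv)). Qed.

Lemma child_dist adj c : wf_adj adj -> c < size adj -> c != 0 ->
  dist adj c = (dist adj (par adj c)).+1.
Proof.
move=> hw hc hc0; have [_ _ _ ->] := par_spec hw hc hc0.
by rewrite prednK // dist_pos.
Qed.

Lemma ssum_rec adj loc v : wf_adj adj -> v < size adj ->
  ssum adj loc v = loc v + \sum_(c <- nbrs adj v | (c != 0) && (par adj c == v)) ssum adj loc c.
Proof.
move=> hw hv; rewrite /ssum.
have h := dist_lt_H hv.
case e: (Hd adj - dist adj v) => [|f].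
  by move/eqP: e; rewrite subn_eq0 leqNgt h.
rewrite /=; congr (_ + _).
rewrite big_seq_cond [RHS]big_seq_cond; apply: eq_bigr => c /andP [hc /andP [c0 /eqP pc]].
have [cn _ _] := nbr_sym hw hv hc.
rewrite (child_dist hw cn c0) pc.
by rewrite subnS e.
Qed.

Lemma ssum_total adj loc : wf_adj adj -> ssum adj loc 0 = \sum_(v < size adj) loc v.
Proof.
move=> hw; have hn : 0 < size adj by case: hw.
have E1 : \sum_(v < size adj) ssum adj loc v =
  \sum_(v < size adj) loc v + \sum_(v < size adj) (if (v : nat) != 0 then ssum adj loc v else 0).
  rewrite (eq_bigr (fun v : 'I_(size adj) => loc v +
            \sum_(c <- nbrs adj v) (if (c != 0) && (par adj c == v) then ssum adj loc c else 0))); last first.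
    by move=> v _; rewrite ssum_rec // big_mkcond.
  rewrite big_split /=; congr (_ + _).
  rewrite (@nbr_swap adj (fun v c => if (c != 0) && (par adj c == v) then ssum adj loc c else 0)) //.
  apply: eq_bigr => c _; case: ifP => hc0 /=.
    have [pn hcp hpc _] := par_spec hw (ltn_ord c) hc0.
    have un : uniq (nbrs adj c) by case: hw => _ h _ _; case: (h c (ltn_ord c)).
    rewrite (bigD1_seq (par adj c)) //= eqxx big1_seq ?addn0 // => v /andP [hv _].
    by rewrite eq_sym (negbTE hv).
  by apply: big1 => v _.
have E2 : \sum_(v < size adj) ssum adj loc v =
  ssum adj loc 0 + \sum_(v < size adj) (if (v : nat) != 0 then ssum adj loc v else 0).
  rewrite (bigD1 (Ordinal hn)) //= [in RHS](bigD1 (Ordinal hn)) //= addnA addn0.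
  congr (_ + _); apply: eq_bigr => v hv; suff -> : (v : nat) != 0 by [].
  by move: hv; apply: contra => /eqP e; apply/eqP; apply: val_inj.
by move: E2; rewrite E1 => /eqP; rewrite eqn_add2r => /eqP.
Qed.

Lemma ssum_par adj loc v : wf_adj adj -> v < size adj -> v != 0 ->
  ssum adj loc v <= ssum adj loc (par adj v).
Proof.
move=> hw hv hv0; have [pn hvp _ _] := par_spec hw hv hv0.
have un : uniq (nbrs adj (par adj v)) by case: hw => _ h _ _; case: (h _ pn).
rewrite [X in _ <= X](ssum_rec _ hw pn) big_mkcond (bigD1_seq v) //= hv0 eqxx /=.
by rewrite addnCA leq_addr.
Qed.

Lemma ssum_le adj loc v : wf_adj adj -> v < size adj -> ssum adj loc v <= ssum adj loc 0.
Proof.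
move=> hw; move: {2}(dist adj v) (leqnn (dist adj v)) => m.
elim: m v => [|m IH] v hd hv.
  case: (eqVneq v 0) => [-> //| hv0].
  by move: (dist_pos hw hv hv0); rewrite leqn0 in hd; rewrite (eqP hd).
case: (eqVneq v 0) => [-> //| hv0].
have [pn _ _ hdp] := par_spec hw hv hv0.
apply: leq_trans (ssum_par loc hw hv hv0) _.
apply: IH => //; rewrite hdp; move: hd; case: (dist adj v) => //= k.
Qed.

Definition idC (C : config) v := idin (nth [::] (cinp C) v).
Definition locC (C : config) v := locin (nth [::] (cinp C) v).
Definition lblN (C : config) v : seq nat :=
  [:: nat_of_bool (v == 0); idC C v; idC C 0; idC C (par (cadj C) v); ssum (cadj C) (locC C) v].
Definition lbl (C : config) v : seq bool := enc_list (map nat2bits (lblN C v)).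
Definition Pr (C : config) : labels := mkseq (lbl C) (size (cadj C)).

Lemma fld_enc ns i : i < size ns -> fld i (enc_list (map nat2bits ns)) = nth 0 ns i.
Proof. by move=> hi; rewrite /fld decK (nth_map 0) // nat2bitsK. Qed.

Lemma lab_Pr C v : v < size (cadj C) -> lab (Pr C) v = lbl C v.
Proof. by move=> hv; rewrite /lab /Pr nth_mkseq. Qed.

Lemma inp_mc adj id w v : v < size adj -> nth [::] (cinp (mc_config adj id w)) v = mc_input adj id w v.
Proof. by move=> hv; rewrite /= nth_mkseq. Qed.

Lemma complete cid K adj id w : mc_legal cid adj id w -> sl adj w <= K ->
  forall v, v < size adj ->
  Vreal K (nth [::] (cinp (mc_config adj id w)) v) (lab (Pr (mc_config adj id w)) v)
        [seq lab (Pr (mc_config adj id w)) u | u <- nbrs adj v].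
Proof.
case=> hw hid _ hwt hK v hv.
set C := mc_config adj id w.
have hn : 0 < size adj by case: hw.
have idE : forall u, u < size adj -> idC C u = id u.
  by move=> u hu; rewrite /idC inp_mc // idin_mc.
have locE : forall u, u < size adj -> locC C u = \sum_(x <- nbrs adj u) w u x.
  by move=> u hu; rewrite /locC inp_mc // locin_mc.
have F : forall u i, u < size adj -> i < 5 -> fld i (lab (Pr C) u) = nth 0 (lblN C u) i.
  by move=> u i hu hi; rewrite lab_Pr // /lbl fld_enc.
have FL : forall u, u < size adj -> flg (lab (Pr C) u) = (u == 0).
  by move=> u hu; rewrite /flg F //=; case: (u == 0).
have s0 : ssum adj (locC C) 0 = sl adj w.
  rewrite ssum_total // /sl; apply: eq_bigr => u _; exact: locE.
apply/and5P; split.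
- by rewrite F.
- apply/allP => m /mapP [u hu ->].
  have [un _ _] := nbr_sym hw hv hu.
  by rewrite !F.
- apply/implyP; rewrite FL // => /eqP hv0; subst v.
  by rewrite !F //= eqxx s0.
- apply/implyP; rewrite FL // => hv0.
  have [pn _ hpv _] := par_spec hw hv hv0.
  apply/hasP; exists (lab (Pr C) (par adj v)); first by apply: map_f.
  by rewrite !F.
  rewrite big_map F // (F v 4) //= (ssum_rec _ hw hv) /locC.
  rewrite leq_add2l big_seq_cond [X in _ <= X]big_seq_cond.
  rewrite (eq_bigl (fun c => (c \in nbrs adj v) && ((c != 0) && (par adj c == v)))).
    apply: leq_sum => c /andP [hc _]; have [cn _ _] := nbr_sym hw hv hc.
    by rewrite F.
  move=> c; case hc: (c \in nbrs adj v) => //=.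
  have [cn _ _] := nbr_sym hw hv hc.
  rewrite FL // !F //=.
  case: (eqVneq c 0) => //= c0.
  have [pn _ _ _] := par_spec hw cn c0.
  rewrite idE // idE //; apply/eqP/eqP => [e|-> //].
  exact: hid.
Qed.

Lemma tl_le n : trunc_log 2 n <= n.
Proof.
case: n => [|n]; first by rewrite trunc_log0.
apply: leq_trans (trunc_logP (isT : 1 < 2) (isT : 0 < n.+1)).
exact: ltnW (ltn_expl _ (isT : 1 < 2)).
Qed.

Lemma tl_mul a b : trunc_log 2 (a * b) <= trunc_log 2 a + trunc_log 2 b + 1.
Proof.
case: a => [|a]; first by rewrite mul0n trunc_log0.
case: b => [|b]; first by rewrite muln0 trunc_log0.
have h1 := trunc_log_ltn a.+1 (isT : 1 < 2).
have h2 := trunc_log_ltn b.+1 (isT : 1 < 2).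
have h3 := trunc_logP (isT : 1 < 2) (isT : 0 < a.+1 * b.+1).
have h4 : a.+1 * b.+1 < 2 ^ (trunc_log 2 a.+1 + trunc_log 2 b.+1 + 1).+1.
  move: h1 h2; rewrite !expnS !expnD expn1.
  move: (2 ^ trunc_log 2 a.+1) (2 ^ trunc_log 2 b.+1) => x y h1 h2.
  nia.
have := leq_ltn_trans h3 h4; rewrite ltn_exp2l //.
Qed.

Lemma sum_le_const (s : seq nat) (f : nat -> nat) m : (forall x, x \in s -> f x <= m) ->
  \sum_(x <- s) f x <= size s * m.
Proof.
elim: s => [|x s IH] h; first by rewrite big_nil.
rewrite big_cons mulSn leq_add ?h ?mem_head //.
by apply: IH => y hy; apply: h; rewrite inE hy orbT.
Qed.

Lemma size_nbrs adj v : wf_adj adj -> v < size adj -> size (nbrs adj v) <= size adj.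
Proof.
case=> _ h _ _ hv; have [u1 /allP u2] := h v hv.
rewrite -[X in _ <= X](size_iota 0); apply: uniq_leq_size => // u hu.
by rewrite mem_iota /=; case/andP: (u2 u hu).
Qed.

Lemma w_le_W adj w v u : v < size adj -> u \in nbrs adj v -> w v u <= mc_W adj w.
Proof.
move=> hv hu; rewrite /mc_W.
apply: leq_trans (@leq_bigmax _ (fun v : 'I_(size adj) => \max_(u <- nbrs adj v) w v u) (Ordinal hv)).
exact: (@leq_bigmax_seq _ _ xpredT (fun u => w v u) u).
Qed.

Lemma sl_le_nW adj w : wf_adj adj -> sl adj w <= size adj * (size adj * mc_W adj w).
Proof.
move=> hw; rewrite /sl -[X in _ <= X * _]card_ord -sum_nat_const.
apply: leq_sum => v _.
apply: leq_trans (sum_le_const (m := mc_W adj w) _) _.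
  by move=> u hu; apply: w_le_W.
by rewrite leq_mul2r size_nbrs ?orbT.
Qed.

Lemma par_lt adj v : 0 < size adj -> par adj v < size adj.
Proof.
move=> hn; rewrite /par.
case e: [seq x <- iota 0 (size adj) | _] => [//|a s] /=.
have : a \in [seq x <- iota 0 (size adj) | (dist adj x == (dist adj v).-1) && (v \in nbrs adj x)].
  by rewrite e mem_head.
by rewrite mem_filter mem_iota => /andP [_ /andP [_]].
Qed.

Lemma has_nbr adj v : wf_adj adj -> 1 < size adj -> v < size adj -> exists u, u \in nbrs adj v.
Proof.
move=> hw h1 hv; case: (eqVneq v 0) => [->|hv0].
  have hw' := hw; case: hw' => _ _ _ hc.
  have [p [hp hl]] := hc 1 h1.
  by case: p hp hl => [|y p] //= /andP [hy _] _; exists y.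
by have [_ _ h _] := par_spec hw hv hv0; exists (par adj v).
Qed.

Lemma n_le_sl adj w : wf_adj adj -> wsym adj w ->
  (forall u v, v < size adj -> u \in nbrs adj v -> 0 < w v u) ->
  1 < size adj -> size adj <= sl adj w.
Proof.
move=> hw _ hpos h1; rewrite /sl -[X in X <= _]card_ord -sum1_card.
apply: leq_sum => v _.
have [u hu] := has_nbr hw h1 (ltn_ord v).
have un : uniq (nbrs adj v) by case: hw => _ h _ _; case: (h v (ltn_ord v)).
rewrite (bigD1_seq u) //=; apply: leq_trans (leq_addr _ _); exact: hpos.
Qed.

Lemma ssum_sl adj id w v : wf_adj adj -> v < size adj ->
  ssum adj (locC (mc_config adj id w)) v <= sl adj w.
Proof.
move=> hw hv; apply: leq_trans (ssum_le _ hw hv) _.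
rewrite ssum_total // /sl; apply: eq_leq; apply: eq_bigr => u _.
by rewrite /locC inp_mc // locin_mc.
Qed.

Lemma lab_size cid adj id w v : mc_legal cid adj id w -> v < size adj ->
  size (lab (Pr (mc_config adj id w)) v) <=
  (6 * cid + 18) * (trunc_log 2 (size adj) + trunc_log 2 (mc_W adj w)) + (6 * cid + 18).
Proof.
move=> hl hv; have hl' := hl; case: hl' => hw hid hsz hwt.
have hn : 0 < size adj by case: hw.
set C := mc_config adj id w.
have bid : forall u, u < size adj -> size (nat2bits (idC C u)) <= cid * trunc_log 2 (size adj) + cid.
  by move=> u hu; rewrite /idC inp_mc // idin_mc; apply: hsz.
have b0 : size (nat2bits (nat_of_bool (v == 0))) <= 1.
  by apply: leq_trans (size_nat2bits _) _; case: (v == 0).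
have bs : size (nat2bits (ssum adj (locC C) v)) <=
          trunc_log 2 (size adj) + trunc_log 2 (size adj) + trunc_log 2 (mc_W adj w) + 3.
  apply: leq_trans (size_nat2bits_log _) _.
  have h1 := leq_trunc_log 2 (leq_trans (@ssum_sl adj id w v hw hv) (@sl_le_nW adj w hw)).
  have h2 := tl_mul (size adj) (size adj * mc_W adj w).
  have h3 := tl_mul (size adj) (mc_W adj w).
  rewrite /C; lia.
rewrite lab_Pr // /lbl size_enc_list big_map /lblN /=.
rewrite !big_cons big_nil.
have := bid v hv; have := bid 0 hn; have := bid _ (@par_lt adj v hn).
move: b0 bs; rewrite /C /=.
move: (trunc_log 2 (size adj)) (trunc_log 2 (mc_W adj w)) => T1 T2.
move=> *; nia.
Qed.

Definition Abd cid K := cid * (K + 1) + cid + K + 1.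
Definition Zbd cid K := (K + 2) * ((Abd cid K).*2 + 2) + 5 * ((Abd cid K).*2 + 2).
Definition BV cid K := (K + 3) * ((Zbd cid K).*2 + 2).
Definition BP cid K := (K + 1) * (((K + 2) * ((Zbd cid K).*2 + 2)).*2 + 2).

Lemma yes_bounds cid K adj id w : mc_legal cid adj id w -> sl adj w <= K ->
  [/\ size adj <= K + 1,
      forall v, v < size adj -> size (mc_input adj id w v) <= Zbd cid K,
      forall v, v < size adj -> size (lab (Pr (mc_config adj id w)) v) <= Zbd cid K &
      forall u, u < size adj -> size (nat2bits u) <= Zbd cid K].
Proof.
move=> hl hK; have hl' := hl; case: hl' => hw hid hsz hwt.
have hn : 0 < size adj by case: hw.
have hs : wsym adj w by move=> v u hv hu; case: (hwt u v hv hu).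
have nK : size adj <= K + 1.
  case: (leqP (size adj) 1) => h1; first by apply: leq_trans h1 _; rewrite leq_addl.
  apply: leq_trans (n_le_sl hw hs _ h1) _; last by apply: leq_trans hK (leq_addr _ _).
  by move=> u v hv hu; case: (hwt u v hv hu).
have idb : forall u, u < size adj -> size (nat2bits (id u)) <= Abd cid K.
  move=> u hu; apply: leq_trans (hsz u hu) _; rewrite /Abd.
  have := tl_le (size adj); move: (trunc_log 2 (size adj)) => t ht; nia.
have locb : forall v, v < size adj -> \sum_(u <- nbrs adj v) w v u <= K.
  move=> v hv; apply: leq_trans hK; rewrite /sl (bigD1 (Ordinal hv)) //=; exact: leq_addr.
have wb : forall v u, v < size adj -> u \in nbrs adj v -> size (nat2bits (w v u)) <= Abd cid K.
  move=> v u hv hu; apply: leq_trans (size_nat2bits _) _.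
  have un : uniq (nbrs adj v) by case: hw => _ h _ _; case: (h v hv).
  apply: (@leq_trans K); last by rewrite /Abd; lia.
  apply: leq_trans (locb v hv); rewrite (bigD1_seq u) //=; exact: leq_addr.
have AZ : (K + 2) * ((Abd cid K).*2 + 2) <= Zbd cid K by rewrite /Zbd leq_addr.
have AZ2 : 5 * ((Abd cid K).*2 + 2) <= Zbd cid K by rewrite /Zbd leq_addl.
split => //.
- move=> v hv; apply: leq_trans (size_enc_list_le (m := Abd cid K) _) _.
    move=> x; rewrite inE => /orP [/eqP -> | /mapP [u hu ->]]; first exact: idb.
    exact: wb.
  apply: leq_trans AZ; rewrite leq_mul2r /= size_map; apply/orP; right.
  have := size_nbrs hw hv; lia.
- move=> v hv; rewrite lab_Pr // /lbl.
  apply: leq_trans (size_enc_list_le (m := Abd cid K) _) _; last by rewrite size_map.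
  move=> x /mapP [y hy ->]; move: hy; rewrite /lblN !inE.
  have idC' : forall u, u < size adj -> idC (mc_config adj id w) u = id u.
    by move=> u hu; rewrite /idC inp_mc // idin_mc.
  case/orP => [/eqP->|/orP [/eqP->|/orP [/eqP->|/orP [/eqP->|/eqP->]]]].
  + by apply: leq_trans (size_nat2bits _) _; case: (v == 0); rewrite /Abd; lia.
  + by rewrite idC' //; apply: idb.
  + by rewrite idC' //; apply: idb.
  + by rewrite idC' ?par_lt //; apply: idb; apply: par_lt.
  + apply: leq_trans (size_nat2bits _) _.
    apply: leq_trans (@ssum_sl adj id w v hw hv) _.
    apply: leq_trans hK _; rewrite /Abd; lia.
- move=> u hu; apply: leq_trans (size_nat2bits _) _.
  apply: leq_trans (ltnW hu) _; apply: leq_trans nK _; rewrite /Zbd /Abd; nia.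
Qed.

Definition dec_config (x : seq bool) : config :=
  Config [seq map bits2nat (behead (dec s)) | s <- dec x] [seq head [::] (dec s) | s <- dec x].

Lemma map_mkseq' (A B : Type) (f : A -> B) g n : [seq f x | x <- mkseq g n] = mkseq (fun v => f (g v)) n.
Proof. by rewrite /mkseq -map_comp. Qed.

Lemma dec_configK adj id w : dec_config (enc_config (mc_config adj id w)) = mc_config adj id w.
Proof.
rewrite /dec_config /enc_config decK !map_mkseq'.
congr Config.
- rewrite -[RHS](mkseq_nth [::]); apply: eq_mkseq => v /=.
  by rewrite decK /= -map_comp (eq_map nat2bitsK) map_id.
- set C := mc_config adj id w.
  have e : size (cinp C) = size (cadj C) by rewrite /= size_mkseq.
  transitivity (mkseq (nth [::] (cinp C)) (size (cadj C))).
    by apply: eq_mkseq => v /=; rewrite decK.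
  by rewrite -[in LHS]e mkseq_nth.
Qed.

Lemma view_size cid K adj id w v : mc_legal cid adj id w -> sl adj w <= K -> v < size adj ->
  size (enc_list (nth [::] (cinp (mc_config adj id w)) v :: lab (Pr (mc_config adj id w)) v
                  :: [seq lab (Pr (mc_config adj id w)) u | u <- nbrs adj v])) <= BV cid K.
Proof.
move=> hl hK hv; have [nK hi hlb _] := yes_bounds hl hK.
have hw : wf_adj adj by case: hl.
apply: leq_trans (size_enc_list_le (m := Zbd cid K) _) _.
  move=> x; rewrite !inE => /orP [/eqP -> | /orP [/eqP -> | /mapP [u hu ->]]].
  - by rewrite inp_mc //; apply: hi.
  - exact: hlb.
  - have [un _ _] := nbr_sym hw hv hu; exact: hlb.
rewrite /BV leq_mul2r /= size_map; apply/orP; right.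
have := size_nbrs hw hv; lia.
Qed.

Lemma config_size cid K adj id w : mc_legal cid adj id w -> sl adj w <= K ->
  size (enc_config (mc_config adj id w)) <= BP cid K.
Proof.
move=> hl hK; have [nK hi hlb hu] := yes_bounds hl hK.
have hw : wf_adj adj by case: hl.
rewrite /enc_config.
apply: leq_trans (size_enc_list_le (m := (K + 2) * ((Zbd cid K).*2 + 2)) _) _.
  move=> x /mapP [v]; rewrite mem_iota /= add0n => hv ->.
  apply: leq_trans (size_enc_list_le (m := Zbd cid K) _) _.
    move=> y; rewrite inE => /orP [/eqP -> | /mapP [u hu' ->]].
    - by rewrite inp_mc //; apply: hi.
    - by have [un _ _] := nbr_sym hw hv hu'; apply: hu.
  rewrite leq_mul2r /= size_map; apply/orP; right.
  have := size_nbrs hw hv; lia.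
by rewrite /BP size_mkseq leq_mul2r nK orbT.
Qed.

Definition Vmain cid K : verifierT := fun sv l ln =>
  (size (enc_list (sv :: l :: ln)) <= BV cid K) && Vreal K sv l ln.

Definition Fv K (x : seq bool) : seq bool :=
  match dec x with sv :: l :: ln => [:: Vreal K sv l ln] | _ => [:: false] end.

Lemma pos_case cid kn :
  exists (P : config -> labels) (V : verifierT),
      mc_ADPLS 2 cid (Posz kn) (fun n W => (6 * cid + 18) * (trunc_log 2 n + trunc_log 2 W) + (6 * cid + 18)) P V /\
      mc_seq_efficient cid (Posz kn) P V.
Proof.
set K := 4 * kn.
exists Pr, (Vmain cid K); split; first split.
- move=> adj id w hl; rewrite lez_nat => hopt.
  have hl' := hl; case: hl' => hw _ _ hwt.
  have hs : wsym adj w by move=> v u hv hu; case: (hwt u v hv hu).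
  have hK : sl adj w <= K.
    apply: leq_trans (sl_le_OPT hw hs) _; rewrite /K; lia.
  split.
  + move=> v hv; rewrite /Vmain /=.
    by rewrite (view_size hl hK hv) (complete hl hK hv).
  + by move=> v hv; apply: lab_size.
- move=> adj id w hl; rewrite -PoszM ltz_nat => hopt L hacc.
  have hl' := hl; case: hl' => hw _ _ hwt.
  have hs : wsym adj w by move=> v u hv hu; case: (hwt u v hv hu).
  have hK : sl adj w <= K.
    apply: (@sound _ _ _ _ _ L hl) => v hv; have := hacc v hv.
    by rewrite /Vmain /= inp_mc // => /andP [_ ->].
  have := OPT_le hw hs; rewrite /K; lia.
- split.
  + have [M [d hM]] := lookup_ok (BP cid K) (fun x => enc_list (Pr (dec_config x))) [::].
    exists M, d => adj id w hl; rewrite lez_nat => hopt.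
    have hl' := hl; case: hl' => hw _ _ hwt.
    have hs : wsym adj w by move=> v u hv hu; case: (hwt u v hv hu).
    have hK : sl adj w <= K.
      apply: leq_trans (sl_le_OPT hw hs) _; rewrite /K; lia.
    by have := hM (enc_config (mc_config adj id w)); rewrite (config_size hl hK) dec_configK.
  + have [M [d hM]] := lookup_ok (BV cid K) (Fv K) [:: false].
    exists M, d => sv l ln.
    have := hM (enc_list (sv :: l :: ln)); rewrite /Vmain /Fv decK.
    by case: ifP.
Qed.

Lemma neg_case cid kn c :
  exists (P : config -> labels) (V : verifierT),
      mc_ADPLS 2 cid (Negz kn) (fun n W => c * (trunc_log 2 n + trunc_log 2 W) + c) P V /\
      mc_seq_efficient cid (Negz kn) P V.
Proof.
exists (fun _ => [::]), (fun _ _ _ => false); split; first split.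
- by move=> adj id w hl.
- move=> adj id w hl _ L hacc.
  have hn : 0 < size adj by case: hl => hw _ _ _; case: hw.
  by have := hacc 0 hn.
- split.
  + have [M [d hM]] := lookup_ok 0 (fun _ => [::]) [::].
    by exists M, d => adj id w hl.
  + have [M [d hM]] := lookup_ok 0 (fun _ => [:: false]) [:: false].
    exists M, d => sv l ln.
    by have := hM (enc_list (sv :: l :: ln)); case: ifP.
Qed.

Theorem theorem5p26 :
  forall cid : nat, exists c : nat, forall k : int,
    exists (P : config -> labels) (V : verifierT),
      mc_ADPLS 2 cid k (fun n W => c * (trunc_log 2 n + trunc_log 2 W) + c) P V /\
      mc_seq_efficient cid k P V.
Proof.
move=> cid; exists (6 * cid + 18); case=> kn.
- exact: pos_case.
- exact: neg_case.
Qed.
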